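(* Let $m\ge 1$, let $f_1,\ldots,f_{m+1}$ be arithmetic functions, and let $\gamma_0,\gamma_1,\ldots,\gamma_m\in\mathbb{N}$ satisfy $\gamma_0=1$ and $\gamma_0\mid\gamma_1\mid\gamma_2\mid\cdots\mid\gamma_m$. Then for all $s\in\mathbb{C}$ with $\Re(s)>\max\{\sigma(f_1),\ldots,\sigma(f_{m+1})\}$, \[ L\bigl(s;f_{m+1}*_{\gamma_m}\cdots*_{\gamma_1}f_1\bigr)=\prod_{j=1}^{m+1}L\bigl(s;f_j^{[\gamma_{j-1}]}\bigr). \]
   Context: $\mathbb{N}=\{1,2,3,\ldots\}$. An arithmetic function is a map $f:\mathbb{N}\to\mathbb{C}$; by convention $f(x)=0$ whenever $x\notin\mathbb{N}$ (e.g. for non-integral rationals $x$). For $\gamma\in\mathbb{N}$, let $a_\gamma(n)=1$ if $n=d^\gamma$ for some $d\in\mathbb{N}$ and $a_\gamma(n)=0$ otherwise, and put $f^{[\gamma]}(n):=a_\gamma(n)f(n)$. For an arithmetic function $f$, $L(s;f):=\sum_{n\ge1}f(n)n^{-s}$ and $\sigma(f)\in\mathbb{R}\cup\{\pm\infty\}$ is the abscissa of absolute convergence of this series. For $\gamma_1,\ldots,\gamma_m\in\mathbb{N}$ and arithmetic functions $f_1,\ldots,f_{m+1}$, the $(\gamma_1,\ldots,\gamma_m)$-convolution is the arithmetic function \[ (f_{m+1}*_{\gamma_m}\cdots*_{\gamma_1}f_1)(n):=\sum_{\substack{(d_1,\ldots,d_m)\in\mathbb{N}^m\\ d_m^{\gamma_m}\mid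 d_{m-1}^{\gamma_{m-1}}\mid\cdots\mid d_1^{\gamma_1}\mid n}} f_1\Bigl(\frac{n}{d_1^{\gamma_1}}\Bigr)f_2\Bigl(\frac{d_1^{\gamma_1}}{d_2^{\gamma_2}}\Bigr)\cdots f_m\Bigl(\frac{d_{m-1}^{\gamma_{m-1}}}{d_m^{\gamma_m}}\Bigr)f_{m+1}\bigl(d_m^{\gamma_m}\bigr). \] *)

(* Defs.v *)
From Stdlib Require Import Reals Arith ClassicalEpsilon.
From Coquelicot Require Import Coquelicot.
Open Scope R_scope.

(* An arithmetic function N -> C; the value at 0 is irrelevant and never used. *)
Definition arith := nat -> C.

(* n^{-s} = exp(-s log n) for n >= 1 *)
Definition npow_neg (n : nat) (s : C) : C :=
  let r := exp (- Re s * ln (INR n)) in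
  let t := Im s * ln (INR n) in
  (r * cos t, - (r * sin t)).

(* The n-th term (n >= 1) of the Dirichlet series, reindexed from 0. *)
Definition Lterm (s : C) (f : arith) (k : nat) : C :=
  Cmult (f (S k)) (npow_neg (S k) s).

Definition Lval (s : C) (f : arith) : C :=
  (real (Lim_seq (fun N => Re (sum_n (Lterm s f) N))),
   real (Lim_seq (fun N => Im (sum_n (Lterm s f) N)))).

Definition sigma_abs (f : arith) : Rbar :=
  Glb_Rbar (fun x : R =>
    ex_series (fun k : nat => Cmod (f (S k)) * Rpower (INR (S k)) (- x))).

Definition restr (g : nat) (f : arith) : arith :=
  fun n => if excluded_middle_informative (exists d : nat, (1 <= d)%nat /\ n = (d ^ g)%nat)
           then f n else RtoC 0%R.

(* Nested convolution: with fuel r and current index j,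
   G 0 j x = f_j(x),
   G (r+1) j x = sum_{d >= 1, d^{gam j} | x} f_j(x / d^{gam j}) G r (j+1) (d^{gam j}).
   For x >= 1 and gam j >= 1, every such d satisfies d <= x. *)
Fixpoint convG (gam : nat -> nat) (f : nat -> arith) (r j x : nat) : C :=
  match r with
  | O => f j x
  | S r' =>
      sum_n (fun d : nat =>
        if excluded_middle_informative ((1 <= d)%nat /\ Nat.divide (d ^ gam j) x)
        then Cmult (f j (x / d ^ gam j)%nat) (convG gam f r' (S j) (d ^ gam j)%nat)
        else (0%R : C)) x
  end.

Definition gconv (m : nat) (gam : nat -> nat) (f : nat -> arith) : arith :=
  fun n => convG gam f m 1 n.

Fixpoint cprod1 (g : nat -> C) (k : nat) : C :=
  match k with
  | O => RtoC 1%R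
  | S k' => Cmult (cprod1 g k') (g k)
  end.

(* Main.v *)
Require Import Defs.
From Stdlib Require Import Reals Arith.
From Coquelicot Require Import Coquelicot.
From Stdlib Require Import Lia Lra Classical ClassicalEpsilon FunctionalExtensionality.
From mathcomp Require ssreflect ssrbool ssrnat div.

Module PowDvd.
Import ssreflect ssrbool ssrnat div.
Lemma powE x g : Nat.pow x g = expn x g.
Proof. elim: g => [|g IH] //=. by rewrite expnS IH multE. Qed.
Lemma pow_dvd (x y g : nat) : (0 < g)%coq_nat -> Nat.divide (Nat.pow x g) (Nat.pow y g) -> Nat.divide x y.
Proof.
  move=> /ltP g0 [z hz].
  have : (x ^ g %| y ^ g)%N. apply/dvdnP. exists z. by rewrite -!powE hz multE.
  rewrite dvdn_pexp2r // => /dvdnP [k hk]. exists k. by rewrite hk multE.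
Qed.
End PowDvd.

Set Bullet Behavior "Strict Subproofs".
Open Scope R_scope.

Section Gen0.
Context {K : AbelianMonoid}.

Lemma sum_n_zero_f (f : nat -> K) N : (forall n, (n <= N)%nat -> f n = zero) -> sum_n f N = zero.
Proof.
  induction N; intros H.
  - rewrite sum_O. apply H. lia.
  - rewrite sum_Sn, IHN. rewrite H by lia. apply plus_zero_r. intros; apply H; lia.
Qed.

Lemma sum_n_extend (f : nat -> K) n k : (forall i, (n < i)%nat -> f i = zero) -> sum_n f (n + k) = sum_n f n.
Proof.
  intros H; induction k.
  - now rewrite Nat.add_0_r.
  - rewrite Nat.add_succ_r, sum_Sn, IHk, H by lia. apply plus_zero_r.
Qed.

Lemma sum_n_extend' (f : nat -> K) n N : (n <= N)%nat -> (forall i, (n < i)%nat -> f i = zero) -> sum_n f N = sum_n f n.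
Proof.
  intros Hn H. replace N with (n + (N - n))%nat by lia. now apply sum_n_extend.
Qed.

Lemma div_step (N d : nat) : (1 <= d)%nat ->
  ((S N) mod d = 0%nat /\ S N / d = S (N / d))%nat \/ ((S N) mod d <> 0%nat /\ S N / d = N / d)%nat.
Proof.
  intros Hd.
  assert (E := Nat.div_mod N d ltac:(lia)).
  assert (B := Nat.mod_upper_bound N d ltac:(lia)).
  set (q := (N / d)%nat) in *. set (r := (N mod d)%nat) in *.
  destruct (Nat.eq_dec (S r) d) as [Hr|Hr].
  - left. split.
    + symmetry. apply (Nat.mod_unique _ _ (S q) 0); lia.
    + symmetry. apply (Nat.div_unique _ _ (S q) 0); lia.
  - right. split.
    + rewrite <- (Nat.mod_unique (S N) d q (S r)); lia.
    + symmetry. apply (Nat.div_unique _ _ q (S r)); lia.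
Qed.

Lemma sum_div_reindex (d N : nat) (g : nat -> K) : (1 <= d)%nat ->
  sum_n (fun n => if Nat.eqb (n mod d) 0 then g (n / d)%nat else zero) N = sum_n g (N / d).
Proof.
  intros Hd. induction N.
  - rewrite sum_O. rewrite Nat.Div0.mod_0_l, Nat.Div0.div_0_l, sum_O. reflexivity.
  - rewrite sum_Sn, IHN. destruct (div_step N d Hd) as [[H1 H2]|[H1 H2]].
    + rewrite H1, H2. simpl. rewrite sum_Sn. reflexivity.
    + rewrite H2. apply Nat.eqb_neq in H1. rewrite H1. apply plus_zero_r.
Qed.

End Gen0.

Section Gen.
Context {K : Ring}.

Definition dconv (u v : nat -> K) (n : nat) : K :=
  sum_n (fun d => if andb (Nat.leb 1 d) (Nat.eqb (n mod d) 0) then mult (u (n / d)%nat) (v d) else zero) n.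

Lemma dconv_sum (u v : nat -> K) N : u 0%nat = zero -> v 0%nat = zero ->
  sum_n (dconv u v) N = sum_n (fun d => mult (sum_n u (N / d)%nat) (v d)) N.
Proof.
  intros hu hv. unfold dconv.
  rewrite (sum_n_ext_loc _ (fun n => sum_n (fun d => if andb (Nat.leb 1 d) (Nat.eqb (n mod d) 0) then mult (u (n / d)%nat) (v d) else zero) N)).
  2:{ intros n Hn. symmetry. apply sum_n_extend'; auto.
      intros i Hi. destruct n.
      - rewrite Nat.Div0.div_0_l, hu, mult_zero_l. now destruct (_ && _)%bool.
      - rewrite Nat.mod_small by lia. simpl (Nat.eqb (S n) 0). now rewrite Bool.andb_false_r. }
  rewrite sum_n_switch. apply sum_n_ext. intros d.
  destruct d as [|d].
  - rewrite hv, mult_zero_r. apply sum_n_zero_f; reflexivity.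
  - rewrite <- sum_n_mult_r. rewrite <- (sum_div_reindex (S d)) by lia.
    apply sum_n_ext. intros n. simpl (Nat.leb 1 (S d)). simpl andb.
    destruct (Nat.eqb _ 0); auto; now rewrite mult_zero_l.
Qed.

End Gen.

Lemma Rsum_le (a b : nat -> R) N : (forall n, (n <= N)%nat -> a n <= b n) -> sum_n a N <= sum_n b N.
Proof.
  induction N; intros H.
  - rewrite !sum_O. apply H; lia.
  - rewrite !sum_Sn. apply Rplus_le_compat. apply IHN; intros; apply H; lia. apply H; lia.
Qed.

Lemma Rsum_nonneg (a : nat -> R) N : (forall n, 0 <= a n) -> 0 <= sum_n a N.
Proof.
  intros H. induction N.
  - rewrite sum_O; auto.
  - rewrite sum_Sn. apply Rplus_le_le_0_compat; auto.
Qed.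

Lemma Rsum_incr (a : nat -> R) N : (forall n, 0 <= a n) -> sum_n a N <= sum_n a (S N).
Proof. intros H. rewrite sum_Sn. change (plus ?x ?y) with (x + y). specialize (H (S N)). lra. Qed.

Lemma Rsum_mono (a : nat -> R) M N : (forall n, 0 <= a n) -> (M <= N)%nat -> sum_n a M <= sum_n a N.
Proof.
  intros H HMN. induction HMN. lra. eapply Rle_trans; [apply IHHMN| apply Rsum_incr; auto].
Qed.

Lemma Cmod_sum (u : nat -> C) N : Cmod (sum_n u N) <= sum_n (fun n => Cmod (u n)) N.
Proof.
  induction N.
  - rewrite !sum_O. lra.
  - rewrite !sum_Sn. eapply Rle_trans. apply Cmod_triangle. change (plus ?x ?y) with (x + y). lra.
Qed.

Lemma Re_sum (u : nat -> C) N : Re (sum_n u N) = sum_n (fun n => Re (u n)) N.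
Proof. induction N. now rewrite !sum_O. rewrite !sum_Sn, <- IHN. reflexivity. Qed.
Lemma Im_sum (u : nat -> C) N : Im (sum_n u N) = sum_n (fun n => Im (u n)) N.
Proof. induction N. now rewrite !sum_O. rewrite !sum_Sn, <- IHN. reflexivity. Qed.

Lemma Csum_minus (f g : nat -> C) N : Cminus (sum_n f N) (sum_n g N) = sum_n (fun n => Cminus (f n) (g n)) N.
Proof.
  induction N. now rewrite !sum_O. rewrite !sum_Sn, <- IHN. change (plus ?x ?y) with (Cplus x y). ring.
Qed.

Lemma Rsum_minus (f g : nat -> R) N : sum_n f N - sum_n g N = sum_n (fun n => f n - g n) N.
Proof.
  induction N. now rewrite !sum_O. rewrite !sum_Sn, <- IHN. change (plus ?x ?y) with (Rplus x y). ring.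
Qed.

Lemma Cmod_partial (u : nat -> C) M N : (M <= N)%nat ->
  Cmod (Cminus (sum_n u N) (sum_n u M)) <= sum_n (fun n => Cmod (u n)) N - sum_n (fun n => Cmod (u n)) M.
Proof.
  intros HMN. induction HMN.
  - replace (Cminus (sum_n u M) (sum_n u M)) with (RtoC 0) by ring. rewrite Cmod_0. lra.
  - rewrite !sum_Sn. change (@plus C_AbelianMonoid ?x ?y) with (Cplus x y). change (@plus R_AbelianMonoid ?x ?y) with (Rplus x y).
    replace (Cminus (Cplus (sum_n u m) (u (S m))) (sum_n u M)) with
      (Cplus (Cminus (sum_n u m) (sum_n u M)) (u (S m))) by ring.
    eapply Rle_trans. apply Cmod_triangle. lra.
Qed.

Lemma Im_le_Cmod (c : C) : Rabs (Im c) <= Cmod c.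
Proof. eapply Rle_trans; [|apply Rmax_Cmod]. apply Rmax_r. Qed.

Definition absc (u : nat -> C) := ex_series (fun n => Cmod (u n)).
Definition csum_to (u : nat -> C) (l : C) :=
  is_lim_seq (fun N => Re (sum_n u N)) (Re l) /\ is_lim_seq (fun N => Im (sum_n u N)) (Im l).

Lemma absc_csum (u : nat -> C) : absc u -> exists l, csum_to u l.
Proof.
  intros H.
  assert (H1 : ex_series (fun n => Re (u n))).
  { apply (@ex_series_le _ R_CompleteNormedModule _ (fun n => Cmod (u n))); auto. intros n. apply re_le_Cmod. }
  assert (H2 : ex_series (fun n => Im (u n))).
  { apply (@ex_series_le _ R_CompleteNormedModule _ (fun n => Cmod (u n))); auto. intros n. apply Im_le_Cmod. }
  destruct H1 as [l1 H1]. destruct H2 as [l2 H2].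
  exists (l1, l2). split.
  - eapply is_lim_seq_ext. intros N; symmetry; apply Re_sum. exact H1.
  - eapply is_lim_seq_ext. intros N; symmetry; apply Im_sum. exact H2.
Qed.

Lemma ex_series_bounded (a : nat -> R) M : (forall n, 0 <= a n) -> (forall N, sum_n a N <= M) -> ex_series a.
Proof.
  intros H0 HM. destruct (ex_finite_lim_seq_incr (sum_n a) M) as [l Hl].
  - intros; apply Rsum_incr; auto.
  - auto.
  - exists l. exact Hl.
Qed.

Lemma partial_le_series (a : nat -> R) N : (forall n, 0 <= a n) -> ex_series a -> sum_n a N <= Series a.
Proof.
  intros H0 H. apply (is_lim_seq_incr_compare (sum_n a)).
  - apply (Series_correct _ H).
  - intros; apply Rsum_incr; auto.
Qed.

Lemma div_le_self (N d : nat) : (N / d <= N)%nat.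
Proof. destruct d. simpl. lia. apply Nat.Div0.div_le_upper_bound. nia. Qed.

Lemma Re_mult (x y : C) : Re (Cmult x y) = Re x * Re y - Im x * Im y.
Proof. destruct x, y; reflexivity. Qed.
Lemma Im_mult (x y : C) : Im (Cmult x y) = Re x * Im y + Im x * Re y.
Proof. destruct x, y; reflexivity. Qed.

Lemma dconv_Cmod (u v : nat -> C) n :
  Cmod (@dconv C_Ring u v n) <= @dconv R_Ring (fun k => Cmod (u k)) (fun k => Cmod (v k)) n.
Proof.
  unfold dconv. eapply Rle_trans. apply Cmod_sum. apply Rsum_le. intros d _.
  destruct (_ && _)%bool.
  - change (Cmod (Cmult (u (n / d)%nat) (v d)) <= Cmod (u (n/d)%nat) * Cmod (v d)). rewrite Cmod_mult. lra.
  - change (Cmod 0 <= 0). rewrite Cmod_0. lra.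
Qed.

Lemma dconv_nonneg (a b : nat -> R) n : (forall k, 0 <= a k) -> (forall k, 0 <= b k) -> 0 <= @dconv R_Ring a b n.
Proof.
  intros Ha Hb. unfold dconv. apply Rsum_nonneg. intros d. destruct (_ && _)%bool.
  - change (0 <= a (n / d)%nat * b d). apply Rmult_le_pos; auto.
  - change (0 <= 0). lra.
Qed.

Theorem dirichlet (u v : nat -> C) (U V : C) : u 0%nat = 0 -> v 0%nat = 0 ->
  absc u -> absc v -> csum_to u U -> csum_to v V ->
  absc (@dconv C_Ring u v) /\ csum_to (@dconv C_Ring u v) (Cmult U V).
Proof.
  intros hu0 hv0 hau hav [hUr hUi] [hVr hVi].
  set (a := fun k => Cmod (u k)). set (b := fun k => Cmod (v k)).
  assert (ha0 : forall k, 0 <= a k) by (intros; apply Cmod_ge_0).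
  assert (hb0 : forall k, 0 <= b k) by (intros; apply Cmod_ge_0).
  assert (hb00 : b 0%nat = 0) by (unfold b; rewrite hv0; apply Cmod_0).
  set (Aa := sum_n a). set (Bb := sum_n b).
  set (T := sum_n (@dconv R_Ring a b)).
  set (At := Series a). set (Bt := Series b).
  assert (hAa : is_lim_seq Aa At) by (apply (Series_correct _ hau)).
  assert (hBb : is_lim_seq Bb Bt) by (apply (Series_correct _ hav)).
  assert (hAaM : forall N, Aa N <= At) by (intros; apply partial_le_series; auto).
  assert (hBbM : forall N, Bb N <= Bt) by (intros; apply partial_le_series; auto).
  assert (hAa0 : forall N, 0 <= Aa N) by (intros; apply Rsum_nonneg; auto).
  assert (hBb0 : forall N, 0 <= Bb N) by (intros; apply Rsum_nonneg; auto).
  assert (hT : forall N, T N = sum_n (fun d => Aa (N / d)%nat * b d) N).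
  { intros N. unfold T. rewrite (@dconv_sum R_Ring). reflexivity.
    unfold a; rewrite hu0; apply Cmod_0. exact hb00. }
  assert (hS : forall N, sum_n (@dconv C_Ring u v) N = sum_n (fun d => Cmult (sum_n u (N / d)%nat) (v d)) N).
  { intros N. rewrite (@dconv_sum C_Ring). reflexivity. exact hu0. exact hv0. }
  assert (hTle : forall N, T N <= Aa N * Bb N).
  { intros N. rewrite hT. unfold Bb. rewrite <- (@sum_n_mult_l R_Ring). apply Rsum_le. intros d Hd.
    change (Aa (N / d)%nat * b d <= Aa N * b d). apply Rmult_le_compat_r; auto.
    apply Rsum_mono; auto. apply div_le_self. }
  assert (hTge : forall N, Aa N * Bb N <= T (N * N)%nat).
  { intros N. rewrite hT. unfold Bb. rewrite <- (@sum_n_mult_l R_Ring).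
    eapply Rle_trans; [| apply Rsum_mono]. 3: { instantiate (1 := N). nia. }
    2: { intros d. apply Rmult_le_pos; auto. }
    apply Rsum_le. intros d Hd. change (Aa N * b d <= Aa (N * N / d)%nat * b d).
    destruct d. rewrite hb00. lra.
    apply Rmult_le_compat_r; auto. apply Rsum_mono; auto. apply Nat.div_le_lower_bound; nia. }
  assert (hTinc : forall N, T N <= T (S N)).
  { intros; apply Rsum_incr. intros; apply dconv_nonneg; auto. }
  assert (hTM : forall N, T N <= At * Bt).
  { intros N. eapply Rle_trans. apply hTle. apply Rmult_le_compat; auto. }
  destruct (ex_finite_lim_seq_incr T (At * Bt) hTinc hTM) as [L hL].
  assert (hLe : L = At * Bt).
  { apply Rle_antisym.
    - assert (X := is_lim_seq_le T (fun _ => At * Bt) L (At * Bt) hTM hL (is_lim_seq_const _)). exact X.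
    - assert (hle : forall N, Aa N * Bb N <= L).
      { intros N. eapply Rle_trans. apply hTge. apply (is_lim_seq_incr_compare T L hL hTinc). }
      assert (X := is_lim_seq_le (fun N => Aa N * Bb N) (fun _ => L) (At * Bt) L hle
                     (is_lim_seq_mult' _ _ _ _ hAa hBb) (is_lim_seq_const _)). exact X. }
  subst L.
  set (D := fun N => Aa N * Bb N - T N).
  assert (hD : is_lim_seq D 0).
  { replace 0 with (At * Bt - At * Bt) by ring. apply is_lim_seq_minus'; auto. apply is_lim_seq_mult'; auto. }
  assert (hdiff : forall N, Cmod (Cminus (Cmult (sum_n u N) (sum_n v N)) (sum_n (@dconv C_Ring u v) N)) <= D N).
  { intros N. rewrite hS. unfold D. rewrite hT.
    rewrite <- (@sum_n_mult_l C_Ring). unfold Bb. rewrite <- (@sum_n_mult_l R_Ring).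
    rewrite Csum_minus, Rsum_minus. eapply Rle_trans. apply Cmod_sum. apply Rsum_le.
    intros d Hd. change (Cmod (Cminus (Cmult (sum_n u N) (v d)) (Cmult (sum_n u (N / d)%nat) (v d)))
       <= Aa N * b d - Aa (N / d)%nat * b d).
    replace (Cminus (Cmult (sum_n u N) (v d)) (Cmult (sum_n u (N / d)%nat) (v d))) with
      (Cmult (Cminus (sum_n u N) (sum_n u (N / d)%nat)) (v d)) by ring.
    rewrite Cmod_mult. replace (Aa N * b d - Aa (N / d)%nat * b d) with ((Aa N - Aa (N / d)%nat) * b d) by ring.
    apply Rmult_le_compat_r; auto. apply Cmod_partial. apply div_le_self. }
  split.
  - apply (ex_series_bounded _ (At * Bt)). intros; apply Cmod_ge_0.
    intros N. eapply Rle_trans; [| apply (hTM N)]. unfold T. apply Rsum_le. intros; apply dconv_Cmod.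
  - set (P := fun N => Cmult (sum_n u N) (sum_n v N)).
    set (E := fun N => Cminus (P N) (sum_n (@dconv C_Ring u v) N)).
    assert (hE : forall N, sum_n (@dconv C_Ring u v) N = Cminus (P N) (E N)) by (intros; unfold E; apply (fun (p x : C) => (ltac:(ring) : x = Cminus p (Cminus p x)))).
    assert (hDn : is_lim_seq (fun N => - D N) 0).
    { pose proof (proj1 (is_lim_seq_opp D 0) hD) as X. simpl in X. rewrite Ropp_0 in X. exact X. }
    assert (hEr : is_lim_seq (fun N => Re (E N)) 0).
    { apply (is_lim_seq_le_le (fun N => - D N) _ D). intros N. apply Rabs_le_between.
      eapply Rle_trans. apply re_le_Cmod. apply hdiff.
      exact hDn. exact hD. }
    assert (hEi : is_lim_seq (fun N => Im (E N)) 0).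
    { apply (is_lim_seq_le_le (fun N => - D N) _ D). intros N. apply Rabs_le_between.
      eapply Rle_trans. apply Im_le_Cmod. apply hdiff.
      exact hDn. exact hD. }
    split.
    + eapply is_lim_seq_ext. intros N. rewrite hE. reflexivity.
      replace (Re (Cmult U V)) with ((Re U * Re V - Im U * Im V) - 0) by (rewrite Re_mult; ring).
      eapply is_lim_seq_ext. intros N. symmetry. change (Re (Cminus (P N) (E N))) with (Re (P N) - Re (E N)).
      unfold P. rewrite Re_mult. reflexivity.
      apply is_lim_seq_minus'; auto. apply is_lim_seq_minus'; apply is_lim_seq_mult'; auto.
    + eapply is_lim_seq_ext. intros N. rewrite hE. reflexivity.
      replace (Im (Cmult U V)) with ((Re U * Im V + Im U * Re V) - 0) by (rewrite Im_mult; ring).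
      eapply is_lim_seq_ext. intros N. symmetry. change (Im (Cminus (P N) (E N))) with (Im (P N) - Im (E N)).
      unfold P. rewrite Im_mult. reflexivity.
      apply is_lim_seq_minus'; auto. apply is_lim_seq_plus'; apply is_lim_seq_mult'; auto.
Qed.

Definition tt (s : C) (F : arith) (n : nat) : C :=
  match n with O => RtoC 0 | _ => Cmult (F n) (npow_neg n s) end.

Lemma npow_mult (p q : nat) s : (1 <= p)%nat -> (1 <= q)%nat ->
  npow_neg (p * q) s = Cmult (npow_neg p s) (npow_neg q s).
Proof.
  intros Hp Hq. unfold npow_neg. rewrite mult_INR, ln_mult.
  2: apply lt_0_INR; lia. 2: apply lt_0_INR; lia.
  set (lp := ln (INR p)). set (lq := ln (INR q)).
  replace (- Re s * (lp + lq)) with (- Re s * lp + - Re s * lq) by ring.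
  replace (Im s * (lp + lq)) with (Im s * lp + Im s * lq) by ring.
  rewrite exp_plus, cos_plus, sin_plus. unfold Cmult; simpl. f_equal; ring.
Qed.

Lemma Cmod_npow (n : nat) s : Cmod (npow_neg n s) = Rpower (INR n) (- Re s).
Proof.
  unfold npow_neg, Rpower, Cmod. simpl.
  set (r := exp (- Re s * ln (INR n))). set (t := Im s * ln (INR n)).
  assert (hr : 0 < r) by apply exp_pos.
  replace (r * cos t * (r * cos t * 1) + - (r * sin t) * (- (r * sin t) * 1)) with
    (r * r * (Rsqr (sin t) + Rsqr (cos t))) by (unfold Rsqr; ring).
  rewrite sin2_cos2, Rmult_1_r, sqrt_square; lra.
Qed.

Lemma absc_sigma (F : arith) s : Rbar_lt (sigma_abs F) (Finite (Re s)) -> absc (tt s F).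
Proof.
  intros H. unfold sigma_abs in H.
  set (E := fun x : R => ex_series (fun k : nat => Cmod (F (S k)) * Rpower (INR (S k)) (- x))) in *.
  assert (Hx : exists x, E x /\ x <= Re s).
  { destruct (classic (exists x, E x /\ x <= Re s)) as [Y|Y]; auto. exfalso.
    destruct (Glb_Rbar_correct E) as [_ Hg].
    assert (Hlb : is_lb_Rbar E (Finite (Re s))).
    { intros x Ex. simpl. destruct (Rle_lt_dec x (Re s)) as [h|h]. exfalso; apply Y; exists x; auto. lra. }
    specialize (Hg _ Hlb). apply (Rbar_lt_not_le _ _ H Hg). }
  destruct Hx as [x [Ex Hxs]].
  unfold absc. apply ex_series_incr_1.
  apply (@ex_series_le _ R_CompleteNormedModule _ (fun k => Cmod (F (S k)) * Rpower (INR (S k)) (- x))); [|exact Ex]. intros k.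
  change (norm ?x) with (Rabs x). simpl (tt s F (S k)).
  rewrite Rabs_pos_eq by apply Cmod_ge_0. rewrite Cmod_mult, Cmod_npow.
  apply Rmult_le_compat_l. apply Cmod_ge_0. apply Rle_Rpower.
  rewrite S_INR. pose proof (pos_INR k). lra. lra.
Qed.

Lemma absc_restr (F : arith) s g : absc (tt s F) -> absc (tt s (restr g F)).
Proof.
  intros H. unfold absc. apply (@ex_series_le _ R_CompleteNormedModule _ (fun n => Cmod (tt s F n))); [|exact H]. intros n.
  change (norm ?x) with (Rabs x). rewrite Rabs_pos_eq by apply Cmod_ge_0.
  destruct n. simpl. lra. simpl. unfold restr.
  destruct (excluded_middle_informative _). lra.
  rewrite !Cmod_mult. rewrite Cmod_0. pose proof (Cmod_ge_0 (F (S n))). pose proof (Cmod_ge_0 (npow_neg (S n) s)). nra.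
Qed.

Lemma sum_tt_Lterm s F N : sum_n (tt s F) (S N) = sum_n (Lterm s F) N.
Proof.
  induction N.
  - rewrite sum_Sn, !sum_O. simpl. change (plus ?x ?y) with (Cplus x y). unfold Lterm. ring.
  - rewrite sum_Sn, IHN, sum_Sn. reflexivity.
Qed.

Lemma Lval_of s F l : csum_to (tt s F) l -> Lval s F = l.
Proof.
  intros [H1 H2]. unfold Lval.
  apply is_lim_seq_incr_1 in H1. apply is_lim_seq_incr_1 in H2.
  rewrite (is_lim_seq_unique _ (Re l)). rewrite (is_lim_seq_unique _ (Im l)).
  destruct l; reflexivity.
  - eapply is_lim_seq_ext; [|exact H2]. intros N. rewrite <- sum_tt_Lterm. reflexivity.
  - eapply is_lim_seq_ext; [|exact H1]. intros N. rewrite <- sum_tt_Lterm. reflexivity.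
Qed.

Lemma sum_single {K : AbelianMonoid} (w : nat -> K) c N :
  sum_n (fun d => if Nat.eqb d c then w d else zero) N = if Nat.leb c N then w c else zero.
Proof.
  induction N.
  - rewrite sum_O. destruct c; reflexivity.
  - rewrite sum_Sn, IHN.
    destruct (Nat.eqb_spec (S N) c) as [e|e].
    + subst c. rewrite (proj2 (Nat.leb_nle (S N) N)) by lia. rewrite Nat.leb_refl. apply plus_zero_l.
    + destruct (Nat.leb_spec c N); destruct (Nat.leb_spec c (S N)); try lia; apply plus_zero_r.
Qed.

Definition pw (g x : nat) := exists d : nat, (1 <= d)%nat /\ x = (d ^ g)%nat.

Lemma pw_equiv g0 ga c n : (1 <= g0)%nat -> Nat.divide g0 ga -> (1 <= c)%nat ->
  Nat.divide (c ^ ga) n -> (1 <= n)%nat -> (pw g0 n <-> pw g0 (n / c ^ ga)).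
Proof.
  intros Hg0 [k Hk] Hc [q Hq] Hn.
  assert (Hck : (1 <= c ^ k)%nat) by (apply Nat.le_succ_l, Nat.neq_0_lt_0, Nat.pow_nonzero; lia).
  assert (HD : (c ^ ga = (c ^ k) ^ g0)%nat) by (rewrite Hk, Nat.pow_mul_r; reflexivity).
  assert (HDnz : (c ^ ga <> 0)%nat) by (apply Nat.pow_nonzero; lia).
  assert (Hqd : (n / c ^ ga = q)%nat) by (rewrite Hq; apply Nat.div_mul; auto).
  rewrite Hqd. split.
  - intros [a [Ha Hna]].
    assert (Hdv : Nat.divide ((c ^ k) ^ g0) (a ^ g0)) by (exists q; rewrite <- Hna, Hq, HD; reflexivity).
    apply PowDvd.pow_dvd in Hdv; [|lia]. destruct Hdv as [t Ht].
    exists t. split.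
    + destruct t; simpl in Ht; lia.
    + rewrite Ht, Nat.pow_mul_l in Hna. rewrite Hq, HD in Hna.
      apply (Nat.mul_cancel_r _ _ ((c ^ k) ^ g0)). apply Nat.pow_nonzero; lia. lia.
  - intros [t [Ht Hqt]]. exists (t * c ^ k)%nat. split. nia.
    rewrite Nat.pow_mul_l, Hq, HD, Hqt. reflexivity.
Qed.

Lemma tt_S s F n : n <> 0%nat -> tt s F n = Cmult (F n) (npow_neg n s).
Proof. destruct n; [lia | reflexivity]. Qed.

Lemma pow_ge_self c g : (1 <= g)%nat -> (c <= c ^ g)%nat.
Proof.
  intros Hg. destruct c. lia. replace (S c) with (S c ^ 1)%nat at 1 by apply Nat.pow_1_r.
  apply Nat.pow_le_mono_r; lia.
Qed.

Lemma key s (f : nat -> arith) gam r j g0 : (1 <= g0)%nat -> (1 <= gam j)%nat -> Nat.divide g0 (gam j) ->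
  tt s (restr g0 (convG gam f (S r) j)) =
  @dconv C_Ring (tt s (restr g0 (f j))) (tt s (restr (gam j) (convG gam f r (S j)))).
Proof.
  intros Hg0 Hga Hdiv. apply functional_extensionality. intros n.
  destruct (Nat.eq_dec n 0) as [Hn0|Hn0].
  { subst n. unfold dconv. rewrite sum_O. reflexivity. }
  set (ga := gam j) in *. set (H := convG gam f r (S j)). set (fj := f j).
  set (Wt := fun d => if excluded_middle_informative ((1 <= d)%nat /\ Nat.divide (d ^ ga) n)
     then (if excluded_middle_informative (pw g0 n) then Cmult (Cmult (fj (n / d ^ ga)%nat) (H (d ^ ga)%nat)) (npow_neg n s) else RtoC 0)
     else RtoC 0).
  transitivity (sum_n Wt n).
  { rewrite tt_S by exact Hn0. unfold restr at 1.
    destruct (excluded_middle_informative (exists d : nat, (1 <= d)%nat /\ n = (d ^ g0)%nat)) as [Hp|Hp].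
    - change (convG gam f (S r) j n) with
        (sum_n (fun d : nat =>
        if excluded_middle_informative ((1 <= d)%nat /\ Nat.divide (d ^ ga) n)
        then Cmult (fj (n / d ^ ga)%nat) (H (d ^ ga)%nat) else (RtoC 0)) n).
      rewrite <- (@sum_n_mult_r C_Ring). apply sum_n_ext. intros d. unfold Wt.
      destruct (excluded_middle_informative ((1 <= d)%nat /\ Nat.divide (d ^ ga) n)).
      + destruct (excluded_middle_informative (pw g0 n)) as [_|Hq]; [reflexivity|]. exfalso; apply Hq, Hp.
      + change (Cmult 0 (npow_neg n s) = 0). ring.
    - change (Cmult 0 (npow_neg n s) = sum_n Wt n). rewrite sum_n_zero_f. change (Cmult 0 (npow_neg n s) = 0). ring.
      intros d _. unfold Wt. destruct (excluded_middle_informative (pw g0 n)) as [Hq|_]; [exfalso; apply Hp, Hq|].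
      destruct (excluded_middle_informative _); reflexivity. }
  symmetry. unfold dconv.
  set (X := fun e d => if andb (Nat.eqb (d ^ ga) e) (Nat.leb 1 d) then Wt d else (RtoC 0)).
  transitivity (sum_n (fun e => sum_n (X e) n) n).
  { apply sum_n_ext_loc. intros e He.
    destruct (classic (exists c, (1 <= c)%nat /\ e = (c ^ ga)%nat)) as [[c [Hc Hec]]|Hno].
    - assert (Hce : (c <= e)%nat) by (rewrite Hec; apply pow_ge_self; lia).
      rewrite (sum_n_ext_loc (X e) (fun d => if Nat.eqb d c then Wt d else zero)).
      2:{ intros d Hd. unfold X. destruct (Nat.eqb_spec d c) as [->|Hdc].
          - rewrite Hec, Nat.eqb_refl. rewrite (proj2 (Nat.leb_le 1 c) Hc). reflexivity.
          - destruct (Nat.eqb_spec (d ^ ga) e) as [Hde|Hde]; [|reflexivity].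
            destruct (Nat.leb_spec 1 d); [|reflexivity]. exfalso. apply Hdc.
            apply (Nat.pow_inj_l _ _ ga). lia. congruence. }
      rewrite sum_single. rewrite (proj2 (Nat.leb_le c n)) by lia.
      assert (He1 : (1 <= e)%nat) by (rewrite Hec; apply Nat.le_succ_l, Nat.neq_0_lt_0, Nat.pow_nonzero; lia).
      rewrite (proj2 (Nat.leb_le 1 e) He1). simpl andb.
      unfold Wt. destruct (Nat.eqb_spec (n mod e) 0) as [Hm|Hm].
      + assert (Hdv : Nat.divide e n) by (apply Nat.Lcm0.mod_divide; exact Hm).
        destruct (excluded_middle_informative ((1 <= c)%nat /\ Nat.divide (c ^ ga) n)) as [_|Hf].
        2:{ exfalso. apply Hf. split; auto. rewrite <- Hec. exact Hdv. }
        rewrite <- Hec.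
        assert (Hne : (n = (n / e) * e)%nat).
        { destruct Hdv as [q Hq]. rewrite Hq at 2. rewrite Nat.div_mul by lia. exact Hq. }
        assert (Hq1 : (n / e <> 0)%nat) by (intros Z; rewrite Z in Hne; lia).
        change (Cmult (tt s (restr g0 fj) (n / e)%nat) (tt s (restr ga H) e) =
           (if excluded_middle_informative (pw g0 n)
            then Cmult (Cmult (fj (n / e)%nat) (H e)) (npow_neg n s) else RtoC 0)).
        rewrite !tt_S by lia. unfold restr.
        destruct (excluded_middle_informative (exists d : nat, (1 <= d)%nat /\ e = (d ^ ga)%nat)) as [_|Hf].
        2:{ exfalso; apply Hf; exists c; auto. }
        assert (Hpe := pw_equiv g0 ga c n Hg0 Hdiv Hc ltac:(rewrite <- Hec; exact Hdv) ltac:(lia)).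
        rewrite <- Hec in Hpe.
        assert (Hnp : npow_neg n s = Cmult (npow_neg (n / e)%nat s) (npow_neg e s)).
        { rewrite <- npow_mult by lia. rewrite <- Hne. reflexivity. }
        destruct (excluded_middle_informative (exists d : nat, (1 <= d)%nat /\ (n / e)%nat = (d ^ g0)%nat)) as [Y|Y];
        destruct (excluded_middle_informative (pw g0 n)) as [Z|Z].
        * rewrite Hnp. ring.
        * exfalso. apply Z, Hpe, Y.
        * exfalso. apply Y, Hpe, Z.
        * change (Cmult (Cmult 0 (npow_neg (n / e)%nat s)) (Cmult (H e) (npow_neg e s)) = 0). ring.
      + destruct (excluded_middle_informative ((1 <= c)%nat /\ Nat.divide (c ^ ga) n)) as [[_ Hf]|_]; [|reflexivity].
        exfalso. apply Hm. apply Nat.Lcm0.mod_divide. rewrite Hec. exact Hf.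
    - rewrite sum_n_zero_f.
      + destruct (Nat.leb 1 e) eqn:E1; [|reflexivity]. destruct (Nat.eqb (n mod e) 0); [|reflexivity]. simpl andb.
        apply Nat.leb_le in E1. rewrite (tt_S s _ e) by lia. unfold restr at 2.
        destruct (excluded_middle_informative (exists d : nat, (1 <= d)%nat /\ e = (d ^ ga)%nat)) as [Y|_]. exfalso; apply Hno; exact Y.
        change (Cmult (tt s (restr g0 fj) (n / e)%nat) (Cmult 0 (npow_neg e s)) = 0). ring.
      + intros d _. unfold X. destruct (Nat.eqb_spec (d ^ ga) e); [|reflexivity].
        destruct (Nat.leb_spec 1 d); [|reflexivity]. exfalso. apply Hno. exists d; split; auto. }
  rewrite sum_n_switch. apply sum_n_ext_loc. intros d Hd.
  unfold X. destruct (Nat.leb_spec 1 d) as [Hd1|Hd1].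
  - rewrite (sum_n_ext _ (fun e => if Nat.eqb e (d ^ ga) then Wt d else zero)).
    2:{ intros e. rewrite Nat.eqb_sym. destruct (Nat.eqb _ _); reflexivity. }
    rewrite (sum_single (fun _ => Wt d)). destruct (Nat.leb_spec (d ^ ga) n); [reflexivity|].
    unfold Wt. destruct (excluded_middle_informative ((1 <= d)%nat /\ Nat.divide (d ^ ga) n)) as [[Hf0 Hf]|_]; [|reflexivity].
    exfalso. apply Nat.divide_pos_le in Hf; lia.
  - rewrite sum_n_zero_f.
    + unfold Wt. destruct (excluded_middle_informative ((1 <= d)%nat /\ Nat.divide (d ^ ga) n)) as [[Hf Hf']|_]; [lia|reflexivity].
    + intros e _. rewrite Bool.andb_false_r. reflexivity.
Qed.

Fixpoint Pr (g : nat -> C) (j r : nat) : C :=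
  match r with O => g j | S r' => Cmult (g j) (Pr g (S j) r') end.

Lemma Pr_S g r : forall j, Pr g j (S r) = Cmult (Pr g j r) (g (j + S r)%nat).
Proof.
  induction r; intros j.
  - simpl. rewrite Nat.add_1_r. reflexivity.
  - change (Pr g j (S (S r))) with (Cmult (g j) (Pr g (S j) (S r))). rewrite IHr.
    replace (S j + S r)%nat with (j + S (S r))%nat by lia. simpl. ring.
Qed.

Lemma cprod1_Pr g k : cprod1 g (S k) = Pr g 1 k.
Proof.
  induction k.
  - simpl. ring.
  - change (cprod1 g (S (S k))) with (Cmult (cprod1 g (S k)) (g (S (S k)))). rewrite IHk, Pr_S. reflexivity.
Qed.

Lemma absc_csum_restr s F g : Rbar_lt (sigma_abs F) (Finite (Re s)) ->
  absc (tt s (restr g F)) /\ csum_to (tt s (restr g F)) (Lval s (restr g F)).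
Proof.
  intros H. assert (Ha : absc (tt s (restr g F))) by (apply absc_restr, absc_sigma, H).
  split; auto. destruct (absc_csum _ Ha) as [l Hl]. rewrite (Lval_of _ _ _ Hl). exact Hl.
Qed.

Lemma restr1 F : forall s, tt s (restr 1 F) = tt s F.
Proof.
  intros s. apply functional_extensionality. intros n. destruct n; [reflexivity|].
  simpl. unfold restr. destruct (excluded_middle_informative _) as [_|Y]; [reflexivity|].
  exfalso. apply Y. exists (S n). split. lia. rewrite Nat.pow_1_r. reflexivity.
Qed.

Theorem proposition2p1 (m : nat) (gam : nat -> nat) (f : nat -> arith) (s : C) :
  (1 <= m)%nat ->
  gam 0%nat = 1%nat ->
  (forall j : nat, (j <= m)%nat -> (0 < gam j)%nat) ->
  (forall j : nat, (1 <= j <= m)%nat -> Nat.divide (gam (j - 1)%nat) (gam j)) ->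
  (forall j : nat, (1 <= j <= m + 1)%nat -> Rbar_lt (sigma_abs (f j)) (Finite (Re s))) ->
  Lval s (gconv m gam f) =
  cprod1 (fun j => Lval s (restr (gam (j - 1)%nat) (f j))) (m + 1)%nat.
Proof.
  intros Hm Hg0 Hpos Hdiv Hsig.
  set (g := fun j => Lval s (restr (gam (j - 1)%nat) (f j))).
  assert (Main : forall r j, (1 <= j)%nat -> (j + r <= m + 1)%nat ->
    absc (tt s (restr (gam (j - 1)%nat) (convG gam f r j))) /\
    csum_to (tt s (restr (gam (j - 1)%nat) (convG gam f r j))) (Pr g j r)).
  { induction r; intros j Hj Hjr.
    - simpl Pr. apply (absc_csum_restr s (f j)). apply Hsig. lia.
    - rewrite key.
      2: { apply Hpos; lia. }
      2: { apply Hpos; lia. }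
      2: { apply Hdiv; lia. }
      destruct (IHr (S j) ltac:(lia) ltac:(lia)) as [IH1 IH2].
      replace (S j - 1)%nat with j in IH1, IH2 by lia.
      destruct (absc_csum_restr s (f j) (gam (j - 1)%nat) (Hsig j ltac:(lia))) as [B1 B2].
      apply dirichlet; auto. }
  rewrite Nat.add_1_r, cprod1_Pr.
  destruct (Main m 1%nat ltac:(lia) ltac:(lia)) as [_ H2].
  simpl (1 - 1)%nat in H2. rewrite Hg0, restr1 in H2.
  apply Lval_of. exact H2.
Qed.
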